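(* For all integers $m,n\geq 1$, \[p^{od}_{ed}(m,2n)-p^{od}_{ed}(m,2n-1)=D_o(m,2n).\]
   Context: $\mathcal{P}^{od}_{ed}$ is the set of integer partitions whose parts are all distinct and such that every even part is smaller than every odd part. Partitions consisting only of odd parts, or only of even parts, are allowed. $p^{od}_{ed}(m,n)$ is the number of partitions of $n$ in $\mathcal{P}^{od}_{ed}$ with exactly $m$ parts. $D_o(m,n)$ is the number of partitions of $n$ into exactly $m$ distinct odd parts. *)

(* Defs.v *)
From mathcomp Require Import all_boot.
Set Implicit Arguments. Unset Strict Implicit. Unset Printing Implicit Defensive.

(* A partition of n into distinct parts is encoded as its set of parts,
   a subset A of {0,...,n} (parts are at most n) not containing 0, with
   sum of elements equal to n. *)
Definition distinct_partition (n : nat) (A : {set 'I_n.+1}) : bool :=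
  (ord0 \notin A) && (\sum_(i in A) (i : nat) == n).

Definition evens_below_odds (n : nat) (A : {set 'I_n.+1}) : bool :=
  [forall i in A, forall j in A, (odd i && ~~ odd j) ==> (j < i)].

Definition p_od_ed (m n : nat) : nat :=
  #|[set A : {set 'I_n.+1} | [&& distinct_partition A, evens_below_odds A
                                 & #|A| == m]]|.

Definition D_o (m n : nat) : nat :=
  #|[set A : {set 'I_n.+1} | [&& distinct_partition A,
                                 [forall i in A, odd i] & #|A| == m]]|.

(* Main.v *)
Require Import Defs.
From mathcomp Require Import all_boot all_algebra zify.
Set Implicit Arguments. Unset Strict Implicit. Unset Printing Implicit Defensive.

Lemma ebo_P n (A : {set 'I_n.+1}) :
  reflect (forall i j, i \in A -> j \in A -> odd i -> ~~ odd j -> j < i)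
          (evens_below_odds A).
Proof.
apply: (iffP forall_inP) => [H i j iA jA oi ej | H i iA].
  by move/forall_inP: (H i iA) => /(_ j jA); rewrite oi ej.
by apply/forall_inP => j jA; apply/implyP => /andP[oi ej]; apply: H.
Qed.

Lemma pos_of n (A : {set 'I_n.+1}) x : ord0 \notin A -> x \in A -> 0 < x.
Proof.
move=> H0 xA; rewrite lt0n; apply/negP => /eqP x0.
have : x = ord0 by apply: val_inj.
by move=> e; move: H0; rewrite -e xA.
Qed.

Lemma le_sum1 M (B : {set 'I_M}) (a : 'I_M) : a \in B -> a <= \sum_(i in B) i.
Proof. by move=> aB; rewrite (bigD1 a) //= leq_addr. Qed.

Lemma le_sum2 M (B : {set 'I_M}) (a b : 'I_M) :
  a \in B -> b \in B -> a != b -> a + b <= \sum_(i in B) i.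
Proof.
move=> aB bB ab; rewrite (bigD1 a) //= (bigD1 b) /=; last by rewrite bB eq_sym ab.
by rewrite addnA leq_addr.
Qed.

Definition mo K (A : {set 'I_K.+1}) (x : nat) : bool :=
  odd x && [forall y in A, odd y ==> (x <= y)].
Definition phi K (A : {set 'I_K.+1}) (x : 'I_K.+1) : 'I_K.+2 := inord (x + mo A x).
Definition fS K (A : {set 'I_K.+1}) := phi A @: A.
Definition me K (B : {set 'I_K.+2}) (y : nat) : bool :=
  ~~ odd y && [forall z in B, ~~ odd z ==> (z <= y)].
Definition psi K (B : {set 'I_K.+2}) (y : 'I_K.+2) : 'I_K.+1 := inord (y - me B y).
Definition hT K (B : {set 'I_K.+2}) := psi B @: B.

Definition Sset K m := [set A : {set 'I_K.+1} | [&& distinct_partition A,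
   evens_below_odds A, #|A| == m & [exists i in A, odd i]]].
Definition Tset K m := [set B : {set 'I_K.+2} | [&& distinct_partition B,
   evens_below_odds B, #|B| == m & [exists i in B, ~~ odd i]]].

Lemma moP K (A : {set 'I_K.+1}) x :
  reflect (odd x /\ forall y, y \in A -> odd y -> x <= y) (mo A x).
Proof.
apply: (iffP andP) => [[ox /forall_inP H] | [ox H]]; split => //.
  by move=> y yA oy; move/implyP: (H y yA); apply.
by apply/forall_inP => y yA; apply/implyP; apply: H.
Qed.

Lemma meP K (B : {set 'I_K.+2}) x :
  reflect (~~ odd x /\ forall y, y \in B -> ~~ odd y -> y <= x) (me B x).
Proof.
apply: (iffP andP) => [[ox /forall_inP H] | [ox H]]; split => //.
  by move=> y yA oy; move/implyP: (H y yA); apply.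
by apply/forall_inP => y yA; apply/implyP; apply: H.
Qed.

Lemma mo_ex K (A : {set 'I_K.+1}) : [exists i in A, odd i] -> exists2 x0, x0 \in A & mo A x0.
Proof.
move/exists_inP=> [i iA oi].
have ex : exists k, [exists x in A, odd x && (val x == k)].
  by exists (val i); apply/exists_inP; exists i => //; rewrite oi eqxx.
case: (ex_minnP ex) => k /exists_inP [x xA /andP[ox /eqP xk]] kmin.
exists x => //; apply/moP; split => // y yA oy; rewrite xk; apply: kmin.
by apply/exists_inP; exists y => //; rewrite oy eqxx.
Qed.

Lemma me_ex K (B : {set 'I_K.+2}) : [exists i in B, ~~ odd i] -> exists2 x0, x0 \in B & me B x0.
Proof.
move/exists_inP=> [i iA oi].
have ex : exists k, [exists x in B, ~~ odd x && (val x == k)].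
  by exists (val i); apply/exists_inP; exists i => //; rewrite oi eqxx.
have ub : forall k, [exists x in B, ~~ odd x && (val x == k)] -> k <= K.+1.
  by move=> k /exists_inP [x _ /andP[_ /eqP <-]]; rewrite -ltnS ltn_ord.
case: (ex_maxnP ex ub) => k /exists_inP [x xA /andP[ox /eqP xk]] kmax.
exists x => //; apply/meP; split => // y yA oy; rewrite xk; apply: kmax.
by apply/exists_inP; exists y => //; rewrite oy eqxx.
Qed.

Lemma mo_uniq K (A : {set 'I_K.+1}) x y : x \in A -> y \in A -> mo A x -> mo A y -> x = y.
Proof.
move=> xA yA /moP[ox Hx] /moP[oy Hy]; apply: val_inj; apply/eqP.
by rewrite eqn_leq Hx // Hy.
Qed.

Lemma me_uniq K (B : {set 'I_K.+2}) x y : x \in B -> y \in B -> me B x -> me B y -> x = y.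
Proof.
move=> xA yA /meP[ox Hx] /meP[oy Hy]; apply: val_inj; apply/eqP.
by rewrite eqn_leq Hx // Hy.
Qed.

Lemma sum_mo K (A : {set 'I_K.+1}) : [exists i in A, odd i] -> \sum_(x in A) (mo A x : nat) = 1.
Proof.
move=> /mo_ex [x0 x0A m0]; rewrite (bigD1 x0) //= m0 big1 // => i /andP[iA ne].
apply/eqP; rewrite eqb0; apply/negP => mi.
by move: ne; rewrite (mo_uniq iA x0A mi m0) eqxx.
Qed.

Lemma sum_me K (B : {set 'I_K.+2}) : [exists i in B, ~~ odd i] -> \sum_(x in B) (me B x : nat) = 1.
Proof.
move=> /me_ex [x0 x0A m0]; rewrite (bigD1 x0) //= m0 big1 // => i /andP[iA ne].
apply/eqP; rewrite eqb0; apply/negP => mi.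
by move: ne; rewrite (me_uniq iA x0A mi m0) eqxx.
Qed.

Lemma fwd K m A : A \in Sset K m -> fS A \in Tset K m /\ hT (fS A) = A.
Proof.
rewrite inE => /and4P[/andP[H0 /eqP Hs] /ebo_P Heb /eqP Hc Hex].
have [x0 x0A m0] := mo_ex Hex.
have vphi : forall x : 'I_K.+1, nat_of_ord (phi A x) = x + mo A x.
  by move=> x; rewrite /phi inordK //; have := ltn_ord x; case: (mo A x) => /=; lia.
have inj : {in A &, injective (phi A)}.
  move=> x y xA yA e; have := congr1 (@nat_of_ord _) e; rewrite !vphi.
  case mx: (mo A x); case my: (mo A y) => /= h; try (apply: val_inj; rewrite /=; simpl in h; lia).
  - move/moP: mx => [ox _].
    have ey : ~~ odd y by rewrite -[nat_of_ord y]addn0 -h oddD ox.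
    have := Heb x y xA yA ox ey; lia.
  - move/moP: my => [oy _].
    have ex : ~~ odd x by rewrite -[nat_of_ord x]addn0 h oddD oy.
    have := Heb y x yA xA oy ex; lia.
have mecorr : forall x, x \in A -> me (fS A) (phi A x) = mo A x.
  move=> x xA; case mx: (mo A x).
    move/moP: (mx) => [ox Hx]; apply/meP; split; first by rewrite vphi mx oddD ox.
    move=> z /imsetP[y yA ->]; rewrite !vphi mx; case my: (mo A y) => /=.
      by rewrite (mo_uniq yA xA my mx).
    rewrite addn0 => ey; have := Heb x y xA yA ox ey; lia.
  apply/negP => /meP[ex Hx]; rewrite vphi mx addn0 in ex Hx.
  move/moP: (m0) => [o0 _].
  have := Hx _ (imset_f (phi A) x0A); rewrite vphi m0 oddD o0 /= => /(_ isT).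
  have := Heb x0 x x0A xA o0 ex; lia.
split; last first.
  rewrite /hT /fS -imset_comp -[RHS]imset_id; apply: eq_in_imset => x xA /=.
  apply: val_inj => /=; rewrite /psi mecorr // vphi addnK inordK //.
rewrite inE; apply/and4P; split.
- apply/andP; split.
    apply/imsetP => [[x xA e]]; have := congr1 (@nat_of_ord _) e; rewrite vphi /=.
    have := pos_of H0 xA; lia.
  rewrite big_imset //; under eq_bigr => i _ do rewrite vphi.
  apply/eqP; by rewrite big_split /= Hs (sum_mo Hex) addn1.
- apply/ebo_P => z1 z2 /imsetP[x1 x1A ->] /imsetP[x2 x2A ->]; rewrite !vphi => o1 e2.
  case m1: (mo A x1).
    by move/moP: (m1) => [ox _]; move: o1; rewrite m1 oddD ox.
  rewrite m1 addn0 in o1.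
  case m2: (mo A x2).
    move/moP: (m2) => [ox2 H2]; have le := H2 _ x1A o1.
    have ne : x2.+1 != x1 by apply/eqP => e; move: o1; rewrite -e /= ox2.
    have ne2 : x2 != x1 :> nat.
      by apply/eqP => e; move: m1; rewrite -(val_inj e) m2.
    move: ne ne2 => /eqP ne /eqP ne2; lia.
  rewrite m2 addn0 in e2 *; have := Heb x1 x2 x1A x2A o1 e2; lia.
- by rewrite card_in_imset // Hc.
apply/exists_inP; exists (phi A x0); first exact: imset_f.
by move/moP: (m0) => [o0 _]; rewrite vphi m0 oddD o0.
Qed.

Lemma oddB1 n : 0 < n -> odd (n - 1) = ~~ odd n.
Proof. by case: n => //= n _; rewrite subn1 /= negbK. Qed.

Lemma bwd K m B : B \in Tset K m -> hT B \in Sset K m /\ fS (hT B) = B.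
Proof.
rewrite inE => /and4P[/andP[H0 /eqP Hs] /ebo_P Heb /eqP Hc Hex].
have [e0 e0B m0] := me_ex Hex.
move/meP: (m0) => [ee0 He0].
have pe0 := pos_of H0 e0B.
have vpsi : forall y, y \in B -> nat_of_ord (psi B y) = y - me B y.
  move=> y yB; rewrite /psi inordK //; have := ltn_ord y.
  case my: (me B y) => /=; first lia.
  case oy: (odd y).
    have ne : y != e0 by apply/eqP => e; move: ee0; rewrite -e oy.
    have := le_sum2 yB e0B ne; rewrite Hs; lia.
  have le := He0 _ yB (negbT oy).
  have ne : y != e0 by apply/eqP => e; move: my; rewrite e m0.
  have := le_sum2 yB e0B ne; move/eqP: ne => ne.
  have ne' : nat_of_ord y <> nat_of_ord e0 by move=> h; apply: ne; apply: val_inj.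
  rewrite Hs; lia.
have inj : {in B &, injective (psi B)}.
  move=> x y xB yB e; have := congr1 (@nat_of_ord _) e; rewrite !vpsi //.
  have px := pos_of H0 xB; have py := pos_of H0 yB.
  case mx: (me B x); case my: (me B y) => /= h; try (apply: val_inj; rewrite /=; lia).
  - move/meP: mx => [ex _].
    have xe : nat_of_ord x = y.+1 by lia.
    have oy : odd y by move: ex; rewrite xe /= negbK.
    have := Heb y x yB xB oy ex; lia.
  - move/meP: my => [ey _].
    have ye : nat_of_ord y = x.+1 by lia.
    have ox : odd x by move: ey; rewrite ye /= negbK.
    have := Heb x y xB yB ox ey; lia.
have mocorr : forall y, y \in B -> mo (hT B) (psi B y) = me B y.
  move=> y yB; have py := pos_of H0 yB; case my: (me B y).
    move/meP: (my) => [ey Hy]; apply/moP; split; first by rewrite vpsi // my oddB1.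
    move=> z /imsetP[y' y'B ->]; rewrite !vpsi // my; case my': (me B y') => /=.
      by rewrite (me_uniq y'B yB my' my).
    rewrite subn0 => oy'; have := Heb y' y y'B yB oy' ey; lia.
  apply/negP => /moP[oy Hy]; rewrite vpsi // my subn0 in oy Hy.
  have := Hy _ (imset_f (psi B) e0B); rewrite vpsi // m0 oddB1 // ee0 => /(_ isT).
  have := Heb y e0 yB e0B oy ee0; lia.
split; last first.
  rewrite /hT /fS -imset_comp -[RHS]imset_id; apply: eq_in_imset => y yB /=.
  apply: val_inj => /=; rewrite /phi mocorr // vpsi // inordK.
    by have := pos_of H0 yB; case: (me B y) => /=; lia.
  by have := ltn_ord y; have := pos_of H0 yB; case: (me B y) => /=; lia.
rewrite inE; apply/and4P; split.
- apply/andP; split.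
    apply/imsetP => [[y yB e]]; have := congr1 (@nat_of_ord _) e; rewrite vpsi //=.
    have := pos_of H0 yB; case my: (me B y) => /=; last lia.
    move/meP: my => [ey _] py h.
    have y1 : nat_of_ord y = 1 by lia.
    by move: ey; rewrite y1.
  have hs : \sum_(i in B) (psi B i : nat) + \sum_(i in B) (me B i : nat) = K.+1.
    rewrite -big_split -[RHS]Hs; apply: eq_bigr => y yB /=; rewrite vpsi //.
    by have := pos_of H0 yB; case: (me B y) => /=; lia.
  apply/eqP; rewrite /hT big_imset //=; move: hs; rewrite (sum_me Hex); by rewrite addn1 => -[].
- apply/ebo_P => z1 z2 /imsetP[y1 y1B ->] /imsetP[y2 y2B ->]; rewrite !vpsi // => o1 e2.
  have p1 := pos_of H0 y1B; have p2 := pos_of H0 y2B.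
  case m2: (me B y2).
    by move/meP: (m2) => [ey _]; move: e2; rewrite m2 oddB1 // ey.
  rewrite m2 subn0 in e2 *.
  case m1: (me B y1).
    move/meP: (m1) => [ey1 H1]; have le := H1 _ y2B e2.
    have ne2 : nat_of_ord y2 <> nat_of_ord y1.
      by move=> e; move: m1; rewrite -(val_inj e) m2.
    have ne : y2.+1 <> y1 by move=> e; move: ey1; rewrite -e /= e2.
    simpl; lia.
  rewrite m1 subn0 in o1 *; have := Heb y1 y2 y1B y2B o1 e2; lia.
- by rewrite card_in_imset // Hc.
apply/exists_inP; exists (psi B e0); first exact: imset_f.
by rewrite vpsi // m0 oddB1 // ee0.
Qed.

Lemma ST K m : #|Sset K m| = #|Tset K m|.
Proof.
apply/eqP; rewrite eqn_leq; apply/andP; split.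
  have injS : {in Sset K m &, injective (@fS K)}.
    by move=> A1 A2 h1 h2 e; rewrite -(fwd h1).2 e (fwd h2).2.
  rewrite -(card_in_imset injS); apply: subset_leq_card; apply/subsetP => B /imsetP[A AS ->].
  exact: (fwd AS).1.
have injT : {in Tset K m &, injective (@hT K)}.
  by move=> A1 A2 h1 h2 e; rewrite -(bwd h1).2 e (bwd h2).2.
rewrite -(card_in_imset injT); apply: subset_leq_card; apply/subsetP => B /imsetP[A AS ->].
exact: (bwd AS).1.
Qed.

Lemma p_odd K m : odd K -> p_od_ed m K = #|Sset K m|.
Proof.
move=> oK; rewrite /p_od_ed; apply: eq_card => A; rewrite /Sset !inE.
case dp: (distinct_partition A) => //=; case: (evens_below_odds A) => //=.
case: (#|A| == m) => //=; case: (boolP [exists i in A, odd i]) => // /negP H.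
move/andP: dp => [_ /eqP Hs].
have : 2 %| \sum_(i in A) (i : nat).
  apply: dvdn_sum => i iA; rewrite dvdn2; apply/negP => oi; apply: H; apply/exists_inP; by exists i.
by rewrite Hs dvdn2 oK.
Qed.

Lemma p_split K m : p_od_ed m K.+1 = D_o m K.+1 + #|Tset K m|.
Proof.
rewrite /p_od_ed /D_o -(cardsID [set B : {set 'I_K.+2} | [exists i in B, ~~ odd i]]) addnC.
congr (_ + _); apply: eq_card => A; rewrite !inE.
  case: (distinct_partition A) => //=; case: (#|A| == m); rewrite ?andbF ?andbT //=.
  case E: [exists i in A, ~~ odd i] => /=.
    move/exists_inP: E => [i iA oi]; case: (boolP [forall i0 in A, odd i0]) => // /forall_inP H.
    by move: (H i iA); rewrite (negbTE oi).
  have H : [forall i in A, odd i].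
    apply/forall_inP => i iA; apply/negPn/negP => oi; move/negbT/negP: E; apply.
    by apply/exists_inP; exists i.
  rewrite H; apply/forall_inP => i iA; apply/forall_inP => j jA.
  by move/forall_inP: H => /(_ j jA) ->; rewrite andbF.
by rewrite andbC; case: [exists i in A, ~~ odd i]; rewrite ?andbF ?andbT //= -andbA.
Qed.

Local Open Scope ring_scope.

Theorem mainTheorem2 (m n : nat) (hm : (1 <= m)%N) (hn : (1 <= n)%N) :
  (p_od_ed m (2 * n))%:Z - (p_od_ed m (2 * n - 1))%:Z = (D_o m (2 * n))%:Z.
Proof.
have oK : odd (2 * n - 1).
  by case: n hn => // n _; rewrite mulnS add2n subSS subn0 /= mul2n odd_double.
have -> : (2 * n = (2 * n - 1).+1)%N by lia.
set K := (2 * n - 1)%N in oK *.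
rewrite subn1 /= p_split (p_odd m oK) ST PoszD GRing.addrK //.
Qed.
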